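(* Let $X=c_0(\mathbb N)$ or $X=\ell^p(\mathbb N)$ with $1\le p<\infty$, let $\lambda=(\lambda_k)_{k\in\mathbb N}\in\ell^\infty(\mathbb N)$, and define $T_\lambda:X\to X$ by $T_\lambda(x_1,x_2,\ldots)=(\lambda_1x_1,\lambda_2x_2,\ldots)$. (A) The following are equivalent: (i) $T_\lambda$ is recurrent; (ii) $T_\lambda$ is rigid; (iii) $|\lambda_k|=1$ for every $k\in\mathbb N$. (B) The following are equivalent: (i) $T_\lambda$ is uniformly rigid; (ii) there is a sequence $(\theta_k)_{k\in\mathbb N}\subset\mathbb R$ with $\lambda_k=e^{2\pi i\theta_k}$ for every $k$ and $\liminf_{n\to\infty}\sup_{k\in\mathbb N}|e^{2\pi in\theta_k}-1|=0$.
   Context: An operator $T$ on a Banach space $X$ is recurrent if for every non-empty open $U\subset X$ there is a positive integer $k$ with $U\cap T^{-k}(U)\neq\emptyset$; rigid if there is an increasing sequence of positive integers $(k_n)$ with $T^{k_n}x\to x$ for all $x\in X$; uniformly rigid if there is an increasing sequence of positive integers $(k_n)$ with $\|T^{k_n}-I\|\to0$. *)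

(* Defs.v *)
From Stdlib Require Import Reals.
From Coquelicot Require Import Coquelicot.
Open Scope R_scope.

(* r ^ p for r >= 0, with the convention 0 ^ p = 0 (p > 0). *)
Definition rpow (r p : R) : R := if Rle_dec r 0 then 0 else Rpower r p.

Inductive seqspace := c0 | lp (p : R).

Definition valid_space (X : seqspace) : Prop :=
  match X with c0 => True | lp p => 1 <= p end.

Definition seq := nat -> C.

Definition inX (X : seqspace) (x : seq) : Prop :=
  match X with
  | c0 => is_lim_seq (fun k => Cmod (x k)) 0
  | lp p => ex_series (fun k => rpow (Cmod (x k)) p)
  end.

Definition sup (E : R -> Prop) : R := real (Lub_Rbar E).

Definition normX (X : seqspace) (x : seq) : R :=
  match X with
  | c0 => sup (fun r => exists k, r = Cmod (x k))
  | lp p => rpow (Series (fun k => rpow (Cmod (x k)) p)) (1 / p)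
  end.

Definition seq_sub (x y : seq) : seq := fun k => Cminus (x k) (y k).

Definition bounded_seq (lam : seq) : Prop :=
  exists M, forall k, Cmod (lam k) <= M.

Definition Tlam (lam : seq) (x : seq) : seq := fun k => Cmult (lam k) (x k).
Definition Tpow (lam : seq) (n : nat) (x : seq) : seq := Nat.iter n (Tlam lam) x.

(* open subsets of X (U is only relevant on elements of X) *)
Definition openX (X : seqspace) (U : seq -> Prop) : Prop :=
  forall x, inX X x -> U x ->
    exists eps, 0 < eps /\ forall y, inX X y -> normX X (seq_sub y x) < eps -> U y.

Definition recurrent (X : seqspace) (lam : seq) : Prop :=
  forall U : seq -> Prop, openX X U -> (exists x, inX X x /\ U x) ->
    exists k : nat, (0 < k)%nat /\
      exists x, inX X x /\ U x /\ U (Tpow lam k x).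

Definition incr_pos (ks : nat -> nat) : Prop :=
  (0 < ks 0)%nat /\ forall n, (ks n < ks (S n))%nat.

Definition rigid (X : seqspace) (lam : seq) : Prop :=
  exists ks, incr_pos ks /\
    forall x, inX X x ->
      is_lim_seq (fun n => normX X (seq_sub (Tpow lam (ks n) x) x)) 0.

Definition opnorm (X : seqspace) (A : seq -> seq) : R :=
  sup (fun r => exists x, inX X x /\ normX X x <= 1 /\ r = normX X (A x)).

Definition unif_rigid (X : seqspace) (lam : seq) : Prop :=
  exists ks, incr_pos ks /\
    is_lim_seq (fun n => opnorm X (fun x => seq_sub (Tpow lam (ks n) x) x)) 0.

Definition cexp_i (t : R) : C := (cos t, sin t).

(* Main.v *)
Require Import Defs.
From Stdlib Require Import Reals Lra Lia Classical ClassicalEpsilon Arith ZArith.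
From Coquelicot Require Import Coquelicot.
Open Scope R_scope.


Lemma sup_le (E : R -> Prop) b : (exists r, E r) -> (forall r, E r -> r <= b) -> sup E <= b.
Proof.
  intros [r0 Hr0] Hb. unfold sup.
  destruct (Lub_Rbar_correct E) as [Hub Hl].
  assert (H1 := Hub r0 Hr0).
  assert (H2 : Rbar_le (Lub_Rbar E) b).
  { apply Hl. intros x Hx. simpl. apply Hb; auto. }
  destruct (Lub_Rbar E); simpl in *; auto; try contradiction.
Qed.

Lemma le_sup (E : R -> Prop) b r : (forall r, E r -> r <= b) -> E r -> r <= sup E.
Proof.
  intros Hb Hr. unfold sup.
  destruct (Lub_Rbar_correct E) as [Hub Hl].
  assert (H1 := Hub r Hr).
  assert (H2 : Rbar_le (Lub_Rbar E) b).
  { apply Hl. intros x Hx. simpl. apply Hb; auto. }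
  destruct (Lub_Rbar E); simpl in *; auto; try contradiction.
Qed.

Lemma rpow_nonneg r p : 0 <= rpow r p.
Proof. unfold rpow. destruct (Rle_dec r 0). lra. unfold Rpower. left; apply exp_pos. Qed.

Lemma rpow_pos r p : 0 < r -> 0 < rpow r p.
Proof. intros. unfold rpow. destruct (Rle_dec r 0). lra. unfold Rpower. apply exp_pos. Qed.

Lemma rpow_le a b p : 0 <= a <= b -> 0 <= p -> rpow a p <= rpow b p.
Proof.
  intros Hab Hp. unfold rpow. destruct (Rle_dec a 0).
  - destruct (Rle_dec b 0). lra. unfold Rpower. left; apply exp_pos.
  - destruct (Rle_dec b 0). lra. apply Rle_Rpower_l; lra.
Qed.

Lemma rpow_lt a b p : 0 <= a < b -> 0 < p -> rpow a p < rpow b p.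
Proof.
  intros Hab Hp. unfold rpow. destruct (Rle_dec a 0).
  - destruct (Rle_dec b 0). lra. unfold Rpower. apply exp_pos.
  - destruct (Rle_dec b 0). lra. apply Rlt_Rpower_l; lra.
Qed.

Lemma rpow_mult a b p : 0 <= a -> 0 <= b -> rpow (a * b) p = rpow a p * rpow b p.
Proof.
  intros Ha Hb.
  destruct (Req_dec a 0) as [->|Ha'].
  { rewrite Rmult_0_l. unfold rpow at 1 2. destruct (Rle_dec 0 0); lra. }
  destruct (Req_dec b 0) as [->|Hb'].
  { rewrite Rmult_0_r. unfold rpow at 1 3. destruct (Rle_dec 0 0); lra. }
  assert (0 < a*b) by (apply Rmult_lt_0_compat; lra).
  unfold rpow.
  destruct (Rle_dec a 0); destruct (Rle_dec b 0); destruct (Rle_dec (a*b) 0); try lra.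
  rewrite Rpower_mult_distr; auto; lra.
Qed.

Lemma rpow_inv a p : 0 <= a -> p <> 0 -> rpow (rpow a p) (1 / p) = a.
Proof.
  intros Ha Hp. unfold rpow at 2. destruct (Rle_dec a 0).
  - unfold rpow. destruct (Rle_dec 0 0); lra.
  - unfold rpow. destruct (Rle_dec (Rpower a p) 0).
    + unfold Rpower in r. pose proof (exp_pos (p * ln a)). lra.
    + rewrite Rpower_mult. replace (p * (1/p)) with 1 by (field; auto).
      apply Rpower_1; lra.
Qed.

Lemma rpow_inv' a p : 0 <= a -> p <> 0 -> rpow (rpow a (1/p)) p = a.
Proof.
  intros Ha Hp. unfold rpow at 2. destruct (Rle_dec a 0).
  - unfold rpow. destruct (Rle_dec 0 0); lra.
  - unfold rpow. destruct (Rle_dec (Rpower a (1/p)) 0).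
    + unfold Rpower in r. pose proof (exp_pos (1/p * ln a)). lra.
    + rewrite Rpower_mult. replace (1/p * p) with 1 by (field; auto).
      apply Rpower_1; lra.
Qed.

Lemma rpow_small a p : 0 <= a <= 1 -> 1 <= p -> rpow a p <= a.
Proof.
  intros Ha Hp. unfold rpow. destruct (Rle_dec a 0). lra.
  unfold Rpower. rewrite <- (exp_ln a) at 2 by lra.
  destruct (Req_dec a 1).
  - subst. rewrite ln_1, Rmult_0_r. lra.
  - assert (ln a < 0). { rewrite <- ln_1. apply ln_increasing; lra. }
    destruct (Req_dec p 1). subst; rewrite Rmult_1_l; lra.
    left; apply exp_increasing; nra.
Qed.


Lemma series_lim a : ex_series a -> is_lim_seq (fun n => sum_f_R0 a n) (Series a).
Proof.
  intros H. apply Series_correct in H.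
  eapply is_lim_seq_ext. intros n. apply sum_n_Reals. exact H.
Qed.

Lemma sum_zero_is (a : nat -> R) : (forall n, a n = 0) -> forall N, sum_f_R0 a N = 0.
Proof. intros H N. induction N; simpl; rewrite H; try rewrite IHN; lra. Qed.

Lemma ex_series_zero (a : nat -> R) : (forall n, a n = 0) -> ex_series a.
Proof.
  intros H. exists 0. unfold is_series.
  change (is_lim_seq (sum_n a) 0).
  apply (is_lim_seq_ext (fun _ => 0)). intros n. rewrite sum_n_Reals, (sum_zero_is a H). reflexivity.
  apply is_lim_seq_const.
Qed.

Lemma Series_zero (a : nat -> R) : (forall n, a n = 0) -> Series a = 0.
Proof.
  intros H. rewrite (Series_ext a (fun n => 0 * a n)). rewrite Series_scal_l. lra.
  intros n; rewrite H; lra.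
Qed.

Lemma series_nonneg a : (forall n, 0 <= a n) -> ex_series a -> 0 <= Series a.
Proof.
  intros H1 H2. apply Rle_trans with (Series (fun _ => 0)).
  right; symmetry; apply Series_zero; auto.
  apply Series_le; auto. intros; split; auto; lra.
Qed.

Lemma term_le_sum (a : nat -> R) k N : (forall n, 0 <= a n) -> (k <= N)%nat -> a k <= sum_f_R0 a N.
Proof.
  intros H HkN. induction N.
  - assert (k = 0%nat) by lia. subst. simpl. lra.
  - destruct (Nat.eq_dec k (S N)).
    + subst. simpl. pose proof (cond_pos_sum a N H). lra.
    + simpl. assert (k <= N)%nat by lia. specialize (IHN H0). specialize (H (S N)). lra.
Qed.

Lemma sum_le_series a N : (forall n, 0 <= a n) -> ex_series a -> sum_f_R0 a N <= Series a.
Proof.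
  intros H1 H2. rewrite (Series_incr_n a (S N)) by (auto; lia). simpl pred.
  assert (0 <= Series (fun k => a (S N + k)%nat)).
  { apply series_nonneg. auto. apply ex_series_incr_n; auto. }
  lra.
Qed.

Lemma term_le_series a k : (forall n, 0 <= a n) -> ex_series a -> a k <= Series a.
Proof.
  intros H1 H2. eapply Rle_trans. apply (term_le_sum a k k); auto.
  apply sum_le_series; auto.
Qed.

Lemma tail_lim a : ex_series a ->
  is_lim_seq (fun n => Series (fun k => a (S n + k)%nat)) 0.
Proof.
  intros H.
  apply (is_lim_seq_ext (fun n => Series a - sum_f_R0 a n)).
  { intros n. rewrite (Series_incr_n a (S n)) at 1 by (auto; lia). simpl pred. ring. }
  replace (Finite 0) with (Finite (Series a - Series a)) by (f_equal; ring).
  apply is_lim_seq_minus'. apply is_lim_seq_const. apply series_lim; auto.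
Qed.


Lemma c0_bounded x : is_lim_seq (fun k => Cmod (x k)) 0 -> exists B, forall k, Cmod (x k) <= B.
Proof.
 intros H. apply is_lim_seq_spec in H. destruct (H (mkposreal 1 Rlt_0_1)) as [N HN].
 exists (1 + sum_f_R0 (fun k => Cmod (x k)) N). intros k.
 pose proof (cond_pos_sum (fun k => Cmod (x k)) N (fun n => Cmod_ge_0 _)).
 destruct (le_lt_dec k N).
 - pose proof (term_le_sum (fun k => Cmod (x k)) k N (fun n => Cmod_ge_0 _) l). lra.
 - specialize (HN k ltac:(lia)). simpl in HN. rewrite Rminus_0_r in HN.
   rewrite Rabs_pos_eq in HN by apply Cmod_ge_0. lra.
Qed.

Lemma coord_le_norm X x j : valid_space X -> inX X x -> Cmod (x j) <= normX X x.
Proof.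
 destruct X as [|p]; simpl; intros HV Hx.
 - destruct (c0_bounded x Hx) as [B HB]. apply le_sup with B.
   intros r [k ->]; auto. exists j; auto.
 - rewrite <- (rpow_inv (Cmod (x j)) p) by (try apply Cmod_ge_0; lra).
   apply rpow_le. split. apply rpow_nonneg. apply (term_le_series (fun k => rpow (Cmod (x k)) p)); auto.
   intros; apply rpow_nonneg.
   unfold Rdiv. rewrite Rmult_1_l. left; apply Rinv_0_lt_compat; lra.
Qed.

Lemma norm_nonneg X x : valid_space X -> inX X x -> 0 <= normX X x.
Proof.
  intros HV Hx. destruct X as [|p].
  - eapply Rle_trans. apply (Cmod_ge_0 (x 0%nat)). apply coord_le_norm; auto.
  - apply rpow_nonneg.
Qed.

Lemma dom_inX X x y C : valid_space X -> 0 <= C ->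
  (forall j, Cmod (y j) <= C * Cmod (x j)) -> inX X x -> inX X y.
Proof.
  intros HV HC Hd Hx. destruct X as [|p]; simpl in *.
  - apply is_lim_seq_le_le with (fun _ => 0) (fun k => C * Cmod (x k)).
    intros n; split; auto. apply Cmod_ge_0.
    apply is_lim_seq_const.
    replace (Finite 0) with (Rbar_mult C 0) by (simpl; f_equal; ring).
    apply is_lim_seq_scal_l; auto.
  - apply (ex_series_le (K:=R_AbsRing) (V:=R_CompleteNormedModule)) with (fun k => rpow C p * rpow (Cmod (x k)) p).
    + intros n. unfold norm; simpl. unfold abs; simpl.
      rewrite Rabs_pos_eq by apply rpow_nonneg. rewrite <- rpow_mult by (auto; apply Cmod_ge_0).
      apply rpow_le. split. apply Cmod_ge_0. auto. lra.
    + apply (ex_series_scal_l (V := R_NormedModule) (rpow C p)) in Hx. exact Hx.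
Qed.

Lemma dom_norm X x y C : valid_space X -> 0 <= C ->
  (forall j, Cmod (y j) <= C * Cmod (x j)) -> inX X x -> normX X y <= C * normX X x.
Proof.
  intros HV HC Hd Hx. destruct X as [|p]; simpl in *.
  - apply sup_le. exists (Cmod (y 0%nat)); exists 0%nat; auto.
    intros r [k ->]. eapply Rle_trans. apply Hd. apply Rmult_le_compat_l; auto.
    apply (coord_le_norm c0); simpl; auto.
  - assert (Hp : 0 < p) by lra.
    rewrite <- (rpow_inv C p) by (auto; lra).
    rewrite <- rpow_mult by (apply rpow_nonneg || (apply series_nonneg; auto; intros; apply rpow_nonneg)).
    apply rpow_le.
    2:{ unfold Rdiv. rewrite Rmult_1_l. left; apply Rinv_0_lt_compat; lra. }
    split. apply series_nonneg. intros; apply rpow_nonneg.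
    eapply dom_inX with (X := lp p); simpl; eauto.
    rewrite <- Series_scal_l. apply Series_le.
    + intros n. split. apply rpow_nonneg. rewrite <- rpow_mult by (auto; apply Cmod_ge_0).
      apply rpow_le. split. apply Cmod_ge_0. auto. lra.
    + apply (ex_series_scal_l (V := R_NormedModule) (rpow C p)) in Hx. exact Hx.
Qed.


Lemma Tpow_coord lam n x k : Tpow lam n x k = Cmult (Cpow (lam k) n) (x k).
Proof.
  induction n.
  - simpl. unfold Tpow. simpl. rewrite Cmult_1_l. auto.
  - unfold Tpow in *. simpl. unfold Tlam at 1. rewrite IHn. rewrite Cmult_assoc. auto.
Qed.

Lemma sub_coord lam n x k :
  seq_sub (Tpow lam n x) x k = Cmult (Cminus (Cpow (lam k) n) 1) (x k).
Proof. unfold seq_sub. rewrite Tpow_coord. ring. Qed.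

Lemma Cmod_sub_coord lam n x k :
  Cmod (seq_sub (Tpow lam n x) x k) = Cmod (Cminus (Cpow (lam k) n) 1) * Cmod (x k).
Proof. rewrite sub_coord, Cmod_mult. auto. Qed.

Lemma Cmod_pow_unit z n : Cmod z = 1 -> Cmod (Cpow z n) = 1.
Proof. intros H. rewrite Cmod_pow, H. apply pow1. Qed.

Lemma Cmod_pow_sub_le2 z n : Cmod z = 1 -> Cmod (Cminus (Cpow z n) 1) <= 2.
Proof.
  intros H. unfold Cminus. eapply Rle_trans. apply Cmod_triangle.
  rewrite Cmod_opp, Cmod_1, Cmod_pow_unit; auto. lra.
Qed.

Lemma bounded_nonneg (lam : nat -> C) M : (forall k, Cmod (lam k) <= M) -> 0 <= M.
Proof. intros H. eapply Rle_trans. apply (Cmod_ge_0 (lam 0%nat)). auto. Qed.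

Lemma Tpow_inX X lam n x : valid_space X -> bounded_seq lam -> inX X x -> inX X (Tpow lam n x).
Proof.
  intros HV [M HM] Hx. apply dom_inX with x (M ^ n); auto.
  apply pow_le. eapply bounded_nonneg; eauto.
  intros j. rewrite Tpow_coord, Cmod_mult, Cmod_pow. apply Rmult_le_compat_r.
  apply Cmod_ge_0. apply pow_incr. split; auto. apply Cmod_ge_0.
Qed.

Lemma sub_inX X lam n x : valid_space X -> (forall k, Cmod (lam k) = 1) -> inX X x ->
  inX X (seq_sub (Tpow lam n x) x).
Proof.
  intros HV Hu Hx. apply dom_inX with x 2; auto. lra.
  intros j. rewrite Cmod_sub_coord. apply Rmult_le_compat_r. apply Cmod_ge_0.
  apply Cmod_pow_sub_le2; auto.
Qed.


Definition infs (S : nat -> Prop) := forall N, exists k, (N <= k)%nat /\ S k.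

Lemma pigeon M : forall (f : nat -> nat) S, infs S -> (forall k, S k -> (f k < M)%nat) ->
  exists v, infs (fun k => S k /\ f k = v).
Proof.
  induction M; intros f S HS Hb.
  - destruct (HS 0%nat) as [k [_ Hk]]. specialize (Hb k Hk). lia.
  - destruct (classic (infs (fun k => S k /\ f k = M))) as [H|H].
    + exists M; auto.
    + apply not_all_ex_not in H. destruct H as [N0 HN0].
      destruct (IHM f (fun k => S k /\ (N0 <= k)%nat)) as [v Hv].
      * intros N. destruct (HS (max N N0)) as [k [Hk1 Hk2]]. exists k. split. lia. split; auto; lia.
      * intros k [Hk1 Hk2]. specialize (Hb k Hk1).
        assert (f k <> M). { intros E. apply HN0. exists k. auto. }
        lia.
      * exists v. intros N. destruct (Hv N) as [k [H1 [[H2 _] H3]]]. exists k; auto.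
Qed.

Lemma refine n : forall (g : nat -> nat -> nat) M S0, infs S0 -> (forall i k, (g i k < M)%nat) ->
  exists S, infs S /\ (forall k, S k -> S0 k) /\
    forall i a b, (i < n)%nat -> S a -> S b -> g i a = g i b.
Proof.
  induction n; intros g M S0 H0 Hg.
  - exists S0. repeat split; auto. intros; lia.
  - destruct (IHn g M S0 H0 Hg) as [S1 [H1 [H2 H3]]].
    destruct (pigeon M (g n) S1 H1) as [v Hv]. intros; auto.
    exists (fun k => S1 k /\ g n k = v). split; auto. split.
    + intros k [Hk _]; auto.
    + intros i a b Hi [Ha Ha'] [Hb Hb']. destruct (Nat.eq_dec i n).
      * subst. congruence.
      * apply H3; auto. lia.
Qed.

Definition bucket (M : nat) (t : R) : nat := Z.to_nat (up (INR M * (t + 1))).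

Lemma bucket_bound M t : -1 <= t <= 1 -> (bucket M t < 2 * M + 2)%nat.
Proof.
  intros Ht. unfold bucket. set (r := INR M * (t + 1)).
  assert (Hr : 0 <= r <= 2 * INR M).
  { pose proof (pos_INR M). unfold r; split; nra. }
  destruct (archimed r) as [A1 A2].
  assert (Hz : (0 <= up r)%Z). { apply le_IZR. lra. }
  apply INR_lt. rewrite INR_IZR_INZ, Z2Nat.id by auto.
  rewrite plus_INR, mult_INR. simpl. lra.
Qed.

Lemma bucket_eq M t t' : -1 <= t -> -1 <= t' -> bucket M t = bucket M t' ->
  Rabs (INR M * t - INR M * t') < 1.
Proof.
  intros Ht Ht' E. unfold bucket in E.
  pose proof (pos_INR M).
  set (r := INR M * (t + 1)) in *. set (r' := INR M * (t' + 1)) in *.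
  assert (0 <= r) by (unfold r; nra). assert (0 <= r') by (unfold r'; nra).
  destruct (archimed r) as [A1 A2]. destruct (archimed r') as [B1 B2].
  assert (Hz : (0 <= up r)%Z). { apply le_IZR. lra. }
  assert (Hz' : (0 <= up r')%Z). { apply le_IZR. lra. }
  apply Z2Nat.inj in E; auto. rewrite E in A1, A2.
  replace (INR M * t - INR M * t') with (r - r') by (unfold r, r'; ring).
  apply Rabs_def1; lra.
Qed.

Lemma Cmod_small (d : C) e : 0 < e -> Rabs (fst d) < e -> Rabs (snd d) < e -> Cmod d < 2 * e.
Proof.
  intros He H1 H2. eapply Rle_lt_trans. apply Cmod_2Rmax.
  assert (Hs : sqrt 2 < 2).
  { pose proof (sqrt_sqrt 2 ltac:(lra)). pose proof (sqrt_pos 2). nra. }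
  assert (Rmax (Rabs (fst d)) (Rabs (snd d)) < e) by (apply Rmax_lub_lt; auto).
  pose proof (Rmax_l (Rabs (fst d)) (Rabs (snd d))). pose proof (Rabs_pos (fst d)).
  pose proof (sqrt_pos 2). nra.
Qed.

Lemma dirichlet (lam : nat -> C) n eps K : 0 < eps -> (forall k, Cmod (lam k) = 1) ->
  exists k, (K <= k)%nat /\ (0 < k)%nat /\
    forall j, (j < n)%nat -> Cmod (Cminus (Cpow (lam j) k) 1) < eps.
Proof.
  intros He Hu.
  destruct (archimed_cor1 (eps / 2)) as [M [HM1 HM2]]. lra.
  assert (HMp : 0 < INR M) by (apply lt_0_INR; auto).
  assert (Hb : forall z : C, Cmod z = 1 -> -1 <= fst z <= 1 /\ -1 <= snd z <= 1).
  { intros z Hz. pose proof (Rmax_Cmod z). rewrite Hz in H.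
    pose proof (Rmax_l (Rabs (fst z)) (Rabs (snd z))).
    pose proof (Rmax_r (Rabs (fst z)) (Rabs (snd z))).
    pose proof (Rle_abs (fst z)). pose proof (Rle_abs (- fst z)).
    pose proof (Rle_abs (snd z)). pose proof (Rle_abs (- snd z)).
    rewrite Rabs_Ropp in *. lra. }
  set (gr := fun i k => bucket M (fst (Cpow (lam i) k))).
  set (gi := fun i k => bucket M (snd (Cpow (lam i) k))).
  destruct (refine n gr (2*M+2) (fun _ => True)) as [S1 [HS1 [_ HS1']]].
  { intros N; exists N; auto. }
  { intros i k. apply bucket_bound. apply Hb. apply Cmod_pow_unit; auto. }
  destruct (refine n gi (2*M+2) S1 HS1) as [S2 [HS2 [HS2i HS2']]].
  { intros i k. apply bucket_bound. apply Hb. apply Cmod_pow_unit; auto. }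
  destruct (HS2 0%nat) as [a [_ Ha]].
  destruct (HS2 (a + K + 1)%nat) as [b [Hab Hb2]].
  exists (b - a)%nat. split. lia. split. lia.
  intros j Hj.
  assert (Eb : Cpow (lam j) b = Cmult (Cpow (lam j) a) (Cpow (lam j) (b - a))).
  { rewrite <- Cpow_add_r. f_equal. lia. }
  assert (Ed : Cminus (Cpow (lam j) b) (Cpow (lam j) a) =
               Cmult (Cpow (lam j) a) (Cminus (Cpow (lam j) (b - a)) 1)).
  { rewrite Eb. ring. }
  assert (Hm : Cmod (Cminus (Cpow (lam j) (b - a)) 1) =
               Cmod (Cminus (Cpow (lam j) b) (Cpow (lam j) a))).
  { rewrite Ed, Cmod_mult, Cmod_pow_unit by auto. ring. }
  rewrite Hm.
  destruct (Hb _ (Cmod_pow_unit (lam j) b (Hu j))) as [Hb1 Hb3].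
  destruct (Hb _ (Cmod_pow_unit (lam j) a (Hu j))) as [Ha1 Ha3].
  assert (E1 := bucket_eq M _ _ (proj1 Hb1) (proj1 Ha1) (HS1' j b a Hj (HS2i b Hb2) (HS2i a Ha))).
  assert (E2 := bucket_eq M _ _ (proj1 Hb3) (proj1 Ha3) (HS2' j b a Hj Hb2 Ha)).
  rewrite <- Rmult_minus_distr_l, Rabs_mult, Rabs_pos_eq in E1, E2 by lra.
  apply Rlt_le_trans with (2 * / INR M).
  2: lra.
  apply Cmod_small.
  apply Rinv_0_lt_compat; auto.
  - simpl. apply Rmult_lt_reg_l with (INR M); auto. rewrite Rinv_r by lra.
    replace (fst (Cpow (lam j) b) + - fst (Cpow (lam j) a)) with
      (fst (Cpow (lam j) b) - fst (Cpow (lam j) a)) by ring. lra.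
  - simpl. apply Rmult_lt_reg_l with (INR M); auto. rewrite Rinv_r by lra.
    replace (snd (Cpow (lam j) b) + - snd (Cpow (lam j) a)) with
      (snd (Cpow (lam j) b) - snd (Cpow (lam j) a)) by ring. lra.
Qed.


Lemma inv_S_le n N : (0 < N)%nat -> (N <= n)%nat -> / INR (S n) <= / INR N.
Proof.
  intros H1 H2. apply Rinv_le_contravar. apply lt_0_INR; auto. apply le_INR; lia.
Qed.

Lemma inv_S_le1 n : / INR (S n) <= 1.
Proof.
  rewrite <- Rinv_1. apply Rinv_le_contravar. lra. rewrite S_INR. pose proof (pos_INR n). lra.
Qed.

Lemma inv_S_pos n : 0 < / INR (S n).
Proof. apply Rinv_0_lt_compat, lt_0_INR; lia. Qed.

Lemma rigid_conv X (lam : nat -> C) ks x : valid_space X -> (forall k, Cmod (lam k) = 1) -> inX X x ->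
  (forall n j, (j <= n)%nat -> Cmod (Cminus (Cpow (lam j) (ks n)) 1) <= / INR (S n)) ->
  is_lim_seq (fun n => normX X (seq_sub (Tpow lam (ks n) x) x)) 0.
Proof.
  intros HV Hu Hx Hks. apply is_lim_seq_spec. intros eps.
  assert (Hpos : forall n, 0 <= normX X (seq_sub (Tpow lam (ks n) x) x)).
  { intros n. apply norm_nonneg; auto. apply sub_inX; auto. }
  assert (Hsuff : eventually (fun n => normX X (seq_sub (Tpow lam (ks n) x) x) < eps)).
  2:{ destruct Hsuff as [N HN]. exists N. intros n Hn. specialize (HN n Hn). specialize (Hpos n).
      rewrite Rminus_0_r, Rabs_pos_eq; auto. }
  pose proof (cond_pos eps) as Heps.
  destruct X as [|p].
  -
    set (B := normX c0 x).
    assert (HB : 0 <= B) by (apply norm_nonneg; auto).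
    pose proof Hx as Hx'. simpl in Hx'. apply is_lim_seq_spec in Hx'.
    destruct (Hx' (mkposreal (eps/4) ltac:(lra))) as [N1 HN1]. simpl in HN1.
    destruct (archimed_cor1 (eps / (2 * (B + 1)))) as [N2 [HN2 HN2']].
    { apply Rdiv_lt_0_compat; lra. }
    exists (max N1 N2). intros n Hn.
    apply Rle_lt_trans with (eps / 2). 2: lra.
    simpl. apply sup_le. exists (Cmod (seq_sub (Tpow lam (ks n) x) x 0%nat)); exists 0%nat; auto.
    intros r [j ->]. rewrite Cmod_sub_coord.
    destruct (le_lt_dec j n) as [Hj|Hj].
    + apply Rle_trans with (/ INR (S n) * B).
      apply Rmult_le_compat. apply Cmod_ge_0. apply Cmod_ge_0. apply Hks; auto.
      apply (coord_le_norm c0); simpl; auto.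
      assert (/ INR (S n) <= / INR N2) by (apply inv_S_le; lia).
      assert (/ INR (S n) * B <= eps / (2 * (B + 1)) * B).
      { apply Rmult_le_compat_r; auto. lra. }
      assert (eps / (2 * (B + 1)) * B <= eps / 2).
      { unfold Rdiv. rewrite Rinv_mult. 
        assert (0 < / (B+1)) by (apply Rinv_0_lt_compat; lra).
        assert (/ (B + 1) * B <= 1).
        { apply Rmult_le_reg_l with (B+1). lra. rewrite <- Rmult_assoc, Rinv_r by lra. lra. }
        nra. }
      lra.
    + specialize (HN1 j ltac:(lia)). rewrite Rminus_0_r, Rabs_pos_eq in HN1 by apply Cmod_ge_0.
      pose proof (Cmod_pow_sub_le2 (lam j) (ks n) (Hu j)).
      pose proof (Cmod_ge_0 (Cminus (Cpow (lam j) (ks n)) 1)). pose proof (Cmod_ge_0 (x j)).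
      nra.
  -
    simpl in HV, Hx. simpl.
    assert (Hp : 0 < p) by lra.
    set (g := fun k => rpow (Cmod (x k)) p).
    set (SS := Series g).
    assert (HS : 0 <= SS) by (apply series_nonneg; auto; intros; apply rpow_nonneg).
    set (Cp := rpow 2 p).
    assert (HCp : 0 <= Cp) by apply rpow_nonneg.
    set (eta := rpow eps p).
    assert (Heta : 0 < eta) by (apply rpow_pos; lra).
    assert (Hbd : forall n, Series (fun k => rpow (Cmod (seq_sub (Tpow lam (ks n) x) x k)) p)
                   <= / INR (S n) * SS + Cp * Series (fun k => g (S n + k)%nat)).
    { intros n.
      set (gd := fun k => rpow (Cmod (seq_sub (Tpow lam (ks n) x) x k)) p).
      assert (Hgd : ex_series gd) by (apply (sub_inX (lp p)); auto).
      assert (Hgd_eq : forall k, gd k = rpow (Cmod (Cminus (Cpow (lam k) (ks n)) 1)) p * g k).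
      { intros k. unfold gd, g. rewrite Cmod_sub_coord. apply rpow_mult; apply Cmod_ge_0. }
      rewrite (Series_incr_n gd (S n)) by (auto; lia). simpl pred.
      apply Rplus_le_compat.
      - apply Rle_trans with (sum_f_R0 (fun k => g k * / INR (S n)) n).
        + apply sum_Rle. intros j Hj. rewrite Hgd_eq, Rmult_comm. apply Rmult_le_compat_l.
          apply rpow_nonneg.
          eapply Rle_trans. apply rpow_small; auto. split. apply Cmod_ge_0.
          eapply Rle_trans. apply Hks; auto. apply inv_S_le1.
          apply Hks; auto.
        + rewrite <- scal_sum. apply Rmult_le_compat_l. left; apply inv_S_pos.
          apply sum_le_series; auto. intros; apply rpow_nonneg.
      - rewrite <- Series_scal_l. apply Series_le.
        + intros k. split. apply rpow_nonneg. rewrite Hgd_eq.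
          apply Rmult_le_compat_r. apply rpow_nonneg. apply rpow_le. split. apply Cmod_ge_0.
          apply Cmod_pow_sub_le2; auto. lra.
        + apply (ex_series_scal_l (V := R_NormedModule) Cp).
          apply (ex_series_incr_n g (S n)). auto. }
    assert (Ht := tail_lim g Hx). apply is_lim_seq_spec in Ht.
    destruct (Ht (mkposreal (eta / (2 * (Cp + 1))) ltac:(apply Rdiv_lt_0_compat; lra))) as [N1 HN1].
    simpl in HN1.
    destruct (archimed_cor1 (eta / (2 * (SS + 1)))) as [N2 [HN2 HN2']].
    { apply Rdiv_lt_0_compat; lra. }
    exists (max N1 N2). intros n Hn.
    rewrite <- (rpow_inv eps p) by lra. fold eta.
    apply rpow_lt. 2:{ unfold Rdiv; rewrite Rmult_1_l; apply Rinv_0_lt_compat; lra. }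
    split. apply series_nonneg. intros; apply rpow_nonneg. apply (sub_inX (lp p)); auto.
    eapply Rle_lt_trans. apply Hbd.
    specialize (HN1 n ltac:(lia)).
    change (Rabs (Series (fun k => g (S n + k)%nat) - 0) < eta / (2 * (Cp + 1))) in HN1.
    set (T := Series (fun k => g (S n + k)%nat)) in *.
    assert (HT : 0 <= T).
    { apply series_nonneg. intros; apply rpow_nonneg. apply (ex_series_incr_n g (S n)); auto. }
    rewrite Rminus_0_r, Rabs_pos_eq in HN1 by auto.
    assert (/ INR (S n) <= / INR N2) by (apply inv_S_le; lia).
    assert (A1 : / INR (S n) * SS < eta / 2).
    { assert (/ INR (S n) * SS <= eta / (2 * (SS + 1)) * SS) by (apply Rmult_le_compat_r; lra).
      assert (eta / (2 * (SS + 1)) * SS < eta / 2).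
      { unfold Rdiv. rewrite Rinv_mult.
        assert (/ (SS + 1) * SS < 1).
        { apply Rmult_lt_reg_l with (SS+1). lra. rewrite <- Rmult_assoc, Rinv_r by lra. lra. }
        assert (0 < / 2) by lra. nra. }
      lra. }
    assert (A2 : Cp * T < eta / 2).
    { assert (Cp * T <= Cp * (eta / (2 * (Cp + 1)))) by (apply Rmult_le_compat_l; lra).
      assert (Cp * (eta / (2 * (Cp + 1))) < eta / 2).
      { unfold Rdiv. rewrite Rinv_mult.
        assert (Cp * / (Cp + 1) < 1).
        { apply Rmult_lt_reg_l with (Cp+1). lra. rewrite Rmult_comm, Rmult_assoc, Rinv_l by lra. lra. }
        assert (0 < / 2) by lra. nra. }
      lra. }
    lra.
Qed.


Lemma Cmod_rev (a b : C) : Rabs (Cmod a - Cmod b) <= Cmod (Cminus a b).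
Proof.
  assert (E1 : Cmod a = Cmod (Cplus (Cminus a b) b)) by (f_equal; ring).
  assert (E2 : Cmod b = Cmod (Cplus (Copp (Cminus a b)) a)) by (f_equal; ring).
  pose proof (Cmod_triangle (Cminus a b) b). pose proof (Cmod_triangle (Copp (Cminus a b)) a).
  rewrite Cmod_opp in H0. rewrite <- E1 in H. rewrite <- E2 in H0.
  apply Rabs_le. lra.
Qed.

Lemma Cmod_sub_le (a b : C) : Cmod (Cminus a b) <= Cmod a + Cmod b.
Proof. unfold Cminus. eapply Rle_trans. apply Cmod_triangle. rewrite Cmod_opp. lra. Qed.

Lemma rpow_max a b p : 0 <= a -> 0 <= b -> rpow (Rmax a b) p <= rpow a p + rpow b p.
Proof.
  intros Ha Hb. unfold Rmax. destruct (Rle_dec a b).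
  - pose proof (rpow_nonneg a p). lra.
  - pose proof (rpow_nonneg b p). lra.
Qed.

Lemma sub_inX2 X x y : valid_space X -> inX X x -> inX X y -> inX X (seq_sub y x).
Proof.
  intros HV Hx Hy. destruct X as [|p]; simpl in *.
  - apply is_lim_seq_le_le with (fun _ => 0) (fun k => Cmod (y k) + Cmod (x k)).
    intros n; split. apply Cmod_ge_0. apply Cmod_sub_le.
    apply is_lim_seq_const.
    replace (Finite 0) with (Finite (0 + 0)) by (f_equal; ring).
    apply is_lim_seq_plus'; auto.
  - apply (ex_series_le (K:=R_AbsRing) (V:=R_CompleteNormedModule)) with
      (fun k => rpow 2 p * (rpow (Cmod (y k)) p + rpow (Cmod (x k)) p)).
    + intros n. unfold norm; simpl. unfold abs; simpl.
      rewrite Rabs_pos_eq by apply rpow_nonneg.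
      pose proof (Cmod_ge_0 (y n)). pose proof (Cmod_ge_0 (x n)).
      apply Rle_trans with (rpow (2 * Rmax (Cmod (y n)) (Cmod (x n))) p).
      * apply rpow_le. split. apply Cmod_ge_0. eapply Rle_trans. apply Cmod_sub_le.
        pose proof (Rmax_l (Cmod (y n)) (Cmod (x n))). pose proof (Rmax_r (Cmod (y n)) (Cmod (x n))). lra.
        lra.
      * rewrite rpow_mult by (first [lra | eapply Rle_trans; [|apply Rmax_l]; auto]).
        apply Rmult_le_compat_l. apply rpow_nonneg. apply rpow_max; auto.
    + apply (ex_series_scal_l (V := R_NormedModule) (rpow 2 p)).
      apply (ex_series_plus (V := R_NormedModule)); auto.
Qed.

Definition zseq : seq := fun _ => RtoC 0.

Lemma rpow_0 p : rpow 0 p = 0.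
Proof. unfold rpow. destruct (Rle_dec 0 0); lra. Qed.

Lemma rpow_1 p : rpow 1 p = 1.
Proof. unfold rpow. destruct (Rle_dec 1 0). lra. unfold Rpower. rewrite ln_1, Rmult_0_r. apply exp_0. Qed.

Lemma zseq_inX X : valid_space X -> inX X zseq.
Proof.
  intros HV. destruct X as [|p]; simpl.
  - apply (is_lim_seq_ext (fun _ => 0)). intros; unfold zseq; rewrite Cmod_0; auto.
    apply is_lim_seq_const.
  - apply ex_series_zero. intros; unfold zseq; rewrite Cmod_0. apply rpow_0.
Qed.

Lemma zseq_norm X : valid_space X -> normX X zseq <= 0.
Proof.
  intros HV. eapply Rle_trans. apply (dom_norm X zseq zseq 0); auto. lra.
  intros; unfold zseq; rewrite Cmod_0; lra. apply zseq_inX; auto. lra.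
Qed.

Definition eseq (j : nat) : seq := fun k => if Nat.eq_dec k j then RtoC 1 else RtoC 0.

Lemma eseq_j j : eseq j j = RtoC 1.
Proof. unfold eseq. destruct (Nat.eq_dec j j); congruence. Qed.

Lemma eseq_inX X j : valid_space X -> inX X (eseq j).
Proof.
  intros HV. destruct X as [|p]; simpl.
  - apply is_lim_seq_spec. intros eps. exists (S j). intros n Hn.
    unfold eseq. destruct (Nat.eq_dec n j). lia. rewrite Cmod_0, Rminus_0_r, Rabs_R0.
    apply cond_pos.
  - apply (ex_series_incr_n _ (S j)). apply ex_series_zero. intros n.
    unfold eseq. destruct (Nat.eq_dec (S j + n) j). lia. rewrite Cmod_0. apply rpow_0.
Qed.

Lemma eseq_norm X j : valid_space X -> normX X (eseq j) <= 1.
Proof.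
  intros HV. destruct X as [|p]; simpl.
  - apply sup_le. exists (Cmod (eseq j 0%nat)); exists 0%nat; auto.
    intros r [k ->]. unfold eseq. destruct (Nat.eq_dec k j). rewrite Cmod_1; lra. rewrite Cmod_0; lra.
  - simpl in HV. set (g := fun k => rpow (Cmod (eseq j k)) p).
    assert (Hg : Series g = 1).
    { rewrite (Series_incr_n_aux g j).
      2:{ intros k Hk. unfold g, eseq. destruct (Nat.eq_dec k j). lia. rewrite Cmod_0. apply rpow_0. }
      rewrite Series_incr_1.
      2:{ apply (ex_series_incr_n g j). apply (eseq_inX (lp p)); auto. }
      rewrite Series_zero. unfold g, eseq. rewrite Nat.add_0_r. destruct (Nat.eq_dec j j).
      rewrite Cmod_1, rpow_1. lra. congruence.
      intros n. unfold g, eseq. destruct (Nat.eq_dec (j + S n) j). lia. rewrite Cmod_0. apply rpow_0. }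
    fold g. rewrite Hg, rpow_1. lra.
Qed.

Definition Aop (lam : seq) (k : nat) : seq -> seq := fun x => seq_sub (Tpow lam k x) x.

Lemma opnorm_upper X lam k b : valid_space X -> (forall j, Cmod (lam j) = 1) -> 0 <= b ->
  (forall j, Cmod (Cminus (Cpow (lam j) k) 1) <= b) -> opnorm X (Aop lam k) <= b.
Proof.
  intros HV Hu Hb Hj. unfold opnorm. apply sup_le.
  - exists (normX X (Aop lam k zseq)). exists zseq. split. apply zseq_inX; auto.
    split; auto. pose proof (zseq_norm X HV). lra.
  - intros r [x [Hx [Hn ->]]]. unfold Aop.
    eapply Rle_trans. apply (dom_norm X x _ b); auto.
    intros j. rewrite Cmod_sub_coord. apply Rmult_le_compat_r; auto. apply Cmod_ge_0.
    pose proof (norm_nonneg X x HV Hx). nra.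
Qed.

Lemma opnorm_lower X (lam : seq) k j : valid_space X -> bounded_seq lam ->
  Cmod (Cminus (Cpow (lam j) k) 1) <= opnorm X (Aop lam k).
Proof.
  intros HV [M HM]. assert (HM0 : 0 <= M) by (eapply bounded_nonneg; eauto).
  assert (Hd : forall x, forall i, Cmod (Aop lam k x i) <= (M ^ k + 1) * Cmod (x i)).
  { intros x i. unfold Aop. rewrite Cmod_sub_coord. apply Rmult_le_compat_r. apply Cmod_ge_0.
    eapply Rle_trans. apply Cmod_sub_le. rewrite Cmod_1, Cmod_pow.
    assert (Cmod (lam i) ^ k <= M ^ k) by (apply pow_incr; split; auto; apply Cmod_ge_0). lra. }
  assert (HMk : 0 <= M ^ k) by (apply pow_le; auto).
  replace (Cmod (Cminus (Cpow (lam j) k) 1)) with (Cmod (Aop lam k (eseq j) j)).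
  2:{ unfold Aop. rewrite Cmod_sub_coord, eseq_j, Cmod_1. ring. }
  apply Rle_trans with (normX X (Aop lam k (eseq j))).
  - apply coord_le_norm; auto. apply dom_inX with (eseq j) (M ^ k + 1); auto. lra.
    apply eseq_inX; auto.
  - unfold opnorm. apply le_sup with (M ^ k + 1).
    + intros r [x [Hx [Hn ->]]]. eapply Rle_trans. apply (dom_norm X x); auto. lra.
      nra.
    + exists (eseq j). split. apply eseq_inX; auto. split. apply eseq_norm; auto. auto.
Qed.


Lemma incr_ge ks : incr_pos ks -> forall n, (n < ks n)%nat.
Proof.
  intros [H0 H1] n. induction n. auto. specialize (H1 n). lia.
Qed.

Lemma pow_le_base r k : 0 <= r <= 1 -> (0 < k)%nat -> r ^ k <= r.
Proof.
  intros Hr Hk. destruct k. lia. simpl.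
  assert (r ^ k <= 1).
  { clear Hk. induction k. simpl; lra. simpl. nra. }
  nra.
Qed.

Lemma pow_ge_base r k : 1 <= r -> (0 < k)%nat -> r <= r ^ k.
Proof.
  intros Hr Hk. destruct k. lia. simpl. pose proof (pow_R1_Rle r k Hr). nra.
Qed.

Lemma unit_rigid X lam : valid_space X -> (forall k, Cmod (lam k) = 1) -> rigid X lam.
Proof.
  intros HV Hu.
  assert (HD : forall n K : nat, {k : nat | (K <= k)%nat /\ (0 < k)%nat /\
     forall j, (j < S n)%nat -> Cmod (Cminus (Cpow (lam j) k) 1) < / INR (S n)}).
  { intros n K. apply constructive_indefinite_description. apply dirichlet; auto. apply inv_S_pos. }
  pose (ks := fix f (n : nat) : nat :=
     match n with O => proj1_sig (HD O 1%nat) | S m => proj1_sig (HD (S m) (S (f m))) end).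
  assert (Hks : forall n, (0 < ks n)%nat /\
     forall j, (j < S n)%nat -> Cmod (Cminus (Cpow (lam j) (ks n)) 1) < / INR (S n)).
  { intros [|n].
    - simpl. destruct (proj2_sig (HD O 1%nat)) as [_ [H1 H2]]. auto.
    - change (ks (S n)) with (proj1_sig (HD (S n) (S (ks n)))).
      destruct (proj2_sig (HD (S n) (S (ks n)))) as [_ [H1 H2]]. auto. }
  assert (Hinc : forall n, (ks n < ks (S n))%nat).
  { intros n. change (ks n < proj1_sig (HD (S n) (S (ks n))))%nat.
    destruct (proj2_sig (HD (S n) (S (ks n)))) as [H1 _]. lia. }
  exists ks. split. split. apply Hks. auto.
  intros x Hx. apply rigid_conv; auto.
  intros n j Hj. left. apply Hks. lia.
Qed.

Lemma rigid_recurrent X lam : valid_space X -> bounded_seq lam -> rigid X lam -> recurrent X lam.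
Proof.
  intros HV Hb [ks [Hinc Hlim]] U HU [x [Hx HUx]].
  destruct (HU x Hx HUx) as [eps [Heps HUe]].
  specialize (Hlim x Hx). apply is_lim_seq_spec in Hlim.
  destruct (Hlim (mkposreal eps Heps)) as [N HN].
  specialize (HN N (le_n N)). simpl in HN.
  exists (ks N). split. pose proof (incr_ge ks Hinc N); lia.
  exists x. repeat split; auto. apply HUe. apply Tpow_inX; auto.
  rewrite Rminus_0_r in HN. eapply Rle_lt_trans. apply Rle_abs. auto.
Qed.

Lemma recurrent_unit X lam : valid_space X -> recurrent X lam -> forall j, Cmod (lam j) = 1.
Proof.
  intros HV Hrec j.
  assert (Key : forall d, 0 < d -> exists k c, (0 < k)%nat /\ 0 <= c /\ Rabs (c - 1) < d /\
                  Rabs (Cmod (lam j) ^ k * c - 1) < d).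
  { intros d Hd.
    destruct (Hrec (fun y => Cmod (Cminus (y j) 1) < d)) as [k [Hk [y [Hy [H1 H2]]]]].
    - intros x Hx Hxd. exists (d - Cmod (Cminus (x j) 1)). split. lra.
      intros y Hy Hn.
      assert (Cmod (seq_sub y x j) <= normX X (seq_sub y x)).
      { apply coord_le_norm; auto. apply sub_inX2; auto. }
      change (Cmod (Cminus (y j) (x j)) <= normX X (seq_sub y x)) in H.
      assert (Cmod (Cminus (y j) 1) <= Cmod (Cminus (y j) (x j)) + Cmod (Cminus (x j) 1)).
      { replace (Cminus (y j) 1) with (Cplus (Cminus (y j) (x j)) (Cminus (x j) 1)) by ring.
        apply Cmod_triangle. }
      lra.
    - exists (eseq j). split. apply eseq_inX; auto. rewrite eseq_j.
      replace (Cminus (RtoC 1) (RtoC 1)) with (RtoC 0) by ring. rewrite Cmod_0. auto.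
    - exists k, (Cmod (y j)). split; auto. split. apply Cmod_ge_0. split.
      + pose proof (Cmod_rev (y j) 1) as E. rewrite Cmod_1 in E. lra.
      + pose proof (Cmod_rev (Tpow lam k y j) 1) as E. rewrite Cmod_1, Tpow_coord, Cmod_mult, Cmod_pow in E. rewrite Tpow_coord in H2.
        lra. }
  set (r := Cmod (lam j)). assert (Hr : 0 <= r) by apply Cmod_ge_0.
  destruct (Rtotal_order r 1) as [Hlt|[Heq|Hgt]]; auto; exfalso.
  - destruct (Key ((1 - r) / 4)) as [k [c [Hk [Hc [H1 H2]]]]]. lra.
    pose proof (pow_le_base r k ltac:(lra) Hk). pose proof (pow_le r k Hr).
    apply Rabs_def2 in H1. apply Rabs_def2 in H2. fold r in H2. nra.
  - set (d := (r - 1) / (2 * (r + 1))).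
    assert (Hd : d * (r + 1) = (r - 1) / 2) by (unfold d; field; lra).
    assert (Hd0 : 0 < d) by (unfold d; apply Rdiv_lt_0_compat; lra).
    assert (Hd1 : d < 1).
    { unfold d. apply Rmult_lt_reg_r with (2 * (r + 1)). lra. unfold Rdiv.
      rewrite Rmult_assoc, Rinv_l by lra. lra. }
    destruct (Key d Hd0) as [k [c [Hk [Hc [H1 H2]]]]].
    pose proof (pow_ge_base r k ltac:(lra) Hk).
    apply Rabs_def2 in H1. apply Rabs_def2 in H2. fold r in H2. nra.
Qed.

Lemma unif_unit X lam : valid_space X -> bounded_seq lam -> unif_rigid X lam ->
  forall j, Cmod (lam j) = 1.
Proof.
  intros HV Hb [ks [Hinc Hlim]] j. apply is_lim_seq_spec in Hlim.
  set (r := Cmod (lam j)). assert (Hr : 0 <= r) by apply Cmod_ge_0.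
  assert (Hks : forall N, (0 < ks N)%nat) by (intros N; pose proof (incr_ge ks Hinc N); lia).
  destruct (Rtotal_order r 1) as [Hlt|[Heq|Hgt]]; auto; exfalso.
  - destruct (Hlim (mkposreal (1 - r) ltac:(lra))) as [N HN]. specialize (HN N (le_n _)). simpl in HN.
    pose proof (opnorm_lower X lam (ks N) j HV Hb) as H0. unfold Aop in H0.
    pose proof (Cmod_rev (Cpow (lam j) (ks N)) 1) as H1. rewrite Cmod_pow, Cmod_1 in H1. fold r in H1.
    pose proof (pow_le_base r (ks N) ltac:(lra) (Hks N)).
    rewrite Rminus_0_r in HN. apply Rabs_def2 in HN.
    pose proof (Rle_abs (- (r ^ ks N - 1))) as H3. rewrite Rabs_Ropp in H3. lra.
  - destruct (Hlim (mkposreal (r - 1) ltac:(lra))) as [N HN]. specialize (HN N (le_n _)). simpl in HN.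
    pose proof (opnorm_lower X lam (ks N) j HV Hb) as H0. unfold Aop in H0.
    pose proof (Cmod_rev (Cpow (lam j) (ks N)) 1) as H1. rewrite Cmod_pow, Cmod_1 in H1. fold r in H1.
    pose proof (pow_ge_base r (ks N) ltac:(lra) (Hks N)).
    rewrite Rminus_0_r in HN. apply Rabs_def2 in HN.
    pose proof (Rle_abs (r ^ ks N - 1)). lra.
Qed.


Lemma cexp_plus a b : cexp_i (a + b) = Cmult (cexp_i a) (cexp_i b).
Proof. unfold cexp_i, Cmult. simpl. rewrite cos_plus, sin_plus. f_equal; ring. Qed.

Lemma cexp_pow n t : cexp_i (INR n * t) = Cpow (cexp_i t) n.
Proof.
  induction n.
  - simpl. unfold cexp_i. rewrite Rmult_0_l, cos_0, sin_0. reflexivity.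
  - rewrite S_INR. replace ((INR n + 1) * t) with (t + INR n * t) by ring.
    rewrite cexp_plus, IHn. reflexivity.
Qed.

Lemma cexp_unit t : Cmod (cexp_i t) = 1.
Proof.
  unfold Cmod, cexp_i. cbn [fst snd]. replace (cos t ^ 2 + sin t ^ 2) with 1.
  apply sqrt_1. rewrite <- (sin2_cos2 t). unfold Rsqr. ring.
Qed.

Lemma unit_angle (z : C) : Cmod z = 1 -> exists t, z = cexp_i (2 * PI * t).
Proof.
  intros H. destruct z as [a b]. unfold Cmod in H; simpl in H.
  assert (Hab : a * (a * 1) + b * (b * 1) = 1).
  { assert (0 <= a * (a * 1) + b * (b * 1)) by nra.
    rewrite <- (sqrt_sqrt (a * (a * 1) + b * (b * 1))) by auto. rewrite H. ring. }
  assert (Ha : -1 <= a <= 1) by nra.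
  assert (Hs : sqrt (1 - a²) = Rabs b).
  { rewrite <- sqrt_Rsqr_abs. f_equal. unfold Rsqr. nra. }
  assert (HPI : 2 * PI <> 0) by (pose proof PI_RGT_0; lra).
  destruct (Rle_dec 0 b).
  - exists (acos a / (2 * PI)). unfold cexp_i.
    replace (2 * PI * (acos a / (2 * PI))) with (acos a) by (field; lra).
    rewrite cos_acos, sin_acos by auto. rewrite Hs, Rabs_pos_eq; auto.
  - exists (- acos a / (2 * PI)). unfold cexp_i.
    replace (2 * PI * (- acos a / (2 * PI))) with (- acos a) by (field; lra).
    rewrite cos_neg, sin_neg, cos_acos, sin_acos by auto. rewrite Hs, Rabs_left by lra.
    f_equal. ring.
Qed.

Definition spow (lam : seq) (n : nat) : R :=
  sup (fun r => exists k, r = Cmod (Cminus (Cpow (lam k) n) 1)).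

Lemma spow_elem (lam : seq) n k : (forall j, Cmod (lam j) = 1) ->
  Cmod (Cminus (Cpow (lam k) n) 1) <= spow lam n.
Proof.
  intros Hu. unfold spow. apply le_sup with 2.
  intros r [j ->]. apply Cmod_pow_sub_le2; auto. exists k; auto.
Qed.

Lemma spow_nonneg lam n : (forall j, Cmod (lam j) = 1) -> 0 <= spow lam n.
Proof. intros Hu. eapply Rle_trans. apply Cmod_ge_0. apply (spow_elem lam n 0%nat Hu). Qed.

Lemma spow_le_op X lam n : valid_space X -> bounded_seq lam -> (forall j, Cmod (lam j) = 1) ->
  spow lam n <= opnorm X (Aop lam n).
Proof.
  intros HV Hb Hu. unfold spow. apply sup_le.
  exists (Cmod (Cminus (Cpow (lam 0%nat) n) 1)); exists 0%nat; auto.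
  intros r [j ->]. apply opnorm_lower; auto.
Qed.

Lemma op_le_spow X lam n : valid_space X -> (forall j, Cmod (lam j) = 1) ->
  opnorm X (Aop lam n) <= spow lam n.
Proof.
  intros HV Hu. apply opnorm_upper; auto. apply spow_nonneg; auto.
  intros j. apply spow_elem; auto.
Qed.

Lemma s_eq (lam : seq) theta n : (forall k, lam k = cexp_i (2 * PI * theta k)) ->
  sup (fun r => exists k, r = Cmod (Cminus (cexp_i (2 * PI * INR n * theta k)) (RtoC 1)))
  = spow lam n.
Proof.
  intros Ht. unfold spow, sup. f_equal. apply Lub_Rbar_eqset. intros r.
  assert (E : forall k, cexp_i (2 * PI * INR n * theta k) = Cpow (lam k) n).
  { intros k. rewrite Ht, <- cexp_pow. f_equal. ring. }
  split; intros [k ->]; exists k; rewrite E; reflexivity.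
Qed.

Theorem theorem5p4 (X : seqspace) (HX : valid_space X)
  (lam : nat -> C) (Hlam : bounded_seq lam) :
  ((recurrent X lam <-> rigid X lam) /\
   (rigid X lam <-> forall k, Cmod (lam k) = 1)) /\
  (unif_rigid X lam <->
   exists theta : nat -> R,
     (forall k, lam k = cexp_i (2 * PI * theta k)) /\
     LimInf_seq (fun n : nat =>
        sup (fun r => exists k, r = Cmod (Cminus (cexp_i (2 * PI * INR n * theta k)) (RtoC 1))))
       = Finite 0).
Proof.
  split; [split; split|split].
  - intros H. apply unit_rigid; auto. apply (recurrent_unit X); auto.
  - apply rigid_recurrent; auto.
  - intros H. apply (recurrent_unit X); auto. apply rigid_recurrent; auto.
  - apply unit_rigid; auto.
  - intros Hur. pose proof (unif_unit X lam HX Hlam Hur) as Hu.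
    set (theta := fun k => proj1_sig (constructive_indefinite_description _ (unit_angle (lam k) (Hu k)))).
    assert (Ht : forall k, lam k = cexp_i (2 * PI * theta k)).
    { intros k. unfold theta. exact (proj2_sig (constructive_indefinite_description _ (unit_angle (lam k) (Hu k)))). }
    exists theta. split; auto.
    apply is_LimInf_seq_unique.
    apply is_LimInf_seq_ext with (spow lam). { intros n. symmetry. apply s_eq; auto. }
    destruct Hur as [ks [Hinc Hlim]]. apply is_lim_seq_spec in Hlim.
    intros eps. split.
    + intros N. destruct (Hlim eps) as [M HM].
      exists (ks (max N M)). split. pose proof (incr_ge ks Hinc (max N M)). lia.
      specialize (HM (max N M) ltac:(lia)). rewrite Rminus_0_r in HM.
      pose proof (spow_le_op X lam (ks (max N M)) HX Hlam Hu). unfold Aop in H.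
      pose proof (Rle_abs (opnorm X (fun x => seq_sub (Tpow lam (ks (Init.Nat.max N M)) x) x))). lra.
    + exists 0%nat. intros n _. pose proof (spow_nonneg lam n Hu). pose proof (cond_pos eps). lra.
  - intros [theta [Ht Hli]].
    assert (Hu : forall k, Cmod (lam k) = 1) by (intros k; rewrite Ht; apply cexp_unit).
    assert (HL : is_LimInf_seq (spow lam) 0).
    { apply is_LimInf_seq_ext with (fun n : nat =>
        sup (fun r => exists k, r = Cmod (Cminus (cexp_i (2 * PI * INR n * theta k)) (RtoC 1)))).
      intros n; apply s_eq; auto.
      rewrite <- Hli. unfold LimInf_seq. apply proj2_sig. }
    assert (HF : forall N m : nat, {n : nat | (N <= n)%nat /\ spow lam n < / INR (S m)}).
    { intros N m. apply constructive_indefinite_description.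
      destruct (HL (mkposreal _ (inv_S_pos m))) as [H1 _]. destruct (H1 N) as [n [Hn1 Hn2]].
      exists n. cbn [pos] in Hn2. split; auto. lra. }
    pose (ks := fix f (n : nat) : nat :=
       match n with O => proj1_sig (HF 1%nat O) | S m => proj1_sig (HF (S (f m)) (S m)) end).
    assert (Hks : forall n, (0 < ks n)%nat /\ spow lam (ks n) < / INR (S n)).
    { intros [|n].
      - simpl. destruct (proj2_sig (HF 1%nat O)) as [H1 H2]. split; auto.
      - change (ks (S n)) with (proj1_sig (HF (S (ks n)) (S n))).
        destruct (proj2_sig (HF (S (ks n)) (S n))) as [H1 H2]. split; auto. lia. }
    assert (Hinc : forall n, (ks n < ks (S n))%nat).
    { intros n. change (ks n < proj1_sig (HF (S (ks n)) (S n)))%nat.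
      destruct (proj2_sig (HF (S (ks n)) (S n))) as [H1 _]. lia. }
    exists ks. split. split; auto. apply Hks.
    apply is_lim_seq_spec. intros eps.
    destruct (archimed_cor1 eps (cond_pos eps)) as [N0 [HN0 HN0']].
    exists N0. intros n Hn.
    pose proof (op_le_spow X lam (ks n) HX Hu). unfold Aop in H.
    pose proof (opnorm_lower X lam (ks n) 0%nat HX Hlam). unfold Aop in H0.
    pose proof (Cmod_ge_0 (Cminus (Cpow (lam 0%nat) (ks n)) 1)).
    pose proof (inv_S_le n N0 HN0' Hn). destruct (Hks n) as [_ Hs].
    rewrite Rminus_0_r, Rabs_pos_eq by lra. lra.
Qed.
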